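(* Let $p$ be a prime and $v$ an integer with $1<v<p-1$ and $p\not\equiv1\pmod v$. Then for every permutation $\pi$ of $\{1,\dots,p-1\}$, the sequence $\pi_v=(\pi(1)\,\%\,v,\dots,\pi(p-1)\,\%\,v)$ has least period $p-1$.
   Context: $x\,\%\,v$ denotes the least nonnegative remainder modulo $v$. The sequence of length $p-1$ is regarded cyclically; its least period is the smallest $\rho>0$ with $\pi_v(i+\rho)=\pi_v(i)$ for all indices $i$ modulo $p-1$. *)

(* Defs.v *)
From mathcomp Require Import all_boot all_fingroup.
Set Implicit Arguments. Unset Strict Implicit. Unset Printing Implicit Defensive.

(* A permutation of {1,...,n} is encoded as pi : {perm 'I_n}, with
   position k (1-based) corresponding to index k-1 and value (pi (k-1)).+1. *)

Definition pi_v (n : nat) (pi : {perm 'I_n}) (v : nat) : seq nat :=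
  [seq (val (pi i)).+1 %% v | i <- enum 'I_n].

Definition cyc_period (s : seq nat) (r : nat) : Prop :=
  forall i, i < size s -> nth 0 s ((i + r) %% size s) = nth 0 s i.

Definition least_period (s : seq nat) (r : nat) : Prop :=
  [/\ 0 < r, cyc_period s r & forall r', 0 < r' -> cyc_period s r' -> r <= r'].

(* Main.v *)
Require Import Defs.
From mathcomp Require Import all_boot all_fingroup zify.

Set Implicit Arguments.
Section Aux.
Variable s : seq nat.
Local Notation n := (size s).
Local Notation f := (nth 0 s).

Lemma per_iter r : cyc_period s r -> forall k i, i < n -> f ((i + k * r) %% n) = f i.
Proof.
move=> H k i lt; elim: k => [|k IH]; first by rewrite mul0n addn0 modn_small.
have n0 : 0 < n by case: n lt.
rewrite mulSn (addnC r) addnA -modnDml -IH; apply: H; by rewrite ltn_mod.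
Qed.

Lemma per_gcd r : cyc_period s r -> cyc_period s (gcdn n r).
Proof.
move=> H i lt.
have n0 : 0 < n by case: n lt.
have [a _ Ha] := Bezoutl r n0.
rewrite -(per_iter H a); last by rewrite ltn_mod.
rewrite modnDml -addnA -modnDmr.
by move/eqP: Ha => ->; rewrite addn0 modn_small.
Qed.

Lemma per_small g : g %| n -> 0 < g -> cyc_period s g ->
  forall i, i < n -> f i = f (i %% g).
Proof.
move=> gn g0 H i; elim: i {-2}i (leqnn i) => [|m IH] i le lt.
  by move: le; rewrite leqn0 => /eqP ->; rewrite mod0n.
case: (ltnP i g) => ig; first by rewrite modn_small.
have -> : i = (i - g) + g by rewrite subnK.
rewrite modnDr -IH; last 2 first.
- move: le g0 => /leP le /ltP g0; apply/leP; rewrite -minusE; lia.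
- by apply: leq_ltn_trans (leq_subr _ _) lt.
- have lt' : i - g < n by apply: leq_ltn_trans (leq_subr _ _) lt.
  by have := H _ lt'; rewrite subnK // modn_small.
Qed.

Lemma per_count g c : g %| n -> 0 < g -> (forall i, i < n -> f i = f (i %% g)) ->
  (n %/ g) %| count (fun i => f i == c) (iota 0 n).
Proof.
move=> gn g0 H.
suff E : forall k, k * g <= n -> count (fun i => f i == c) (iota 0 (k * g)) =
   k * count (fun i => f i == c) (iota 0 g).
  by rewrite -{2}(divnK gn) E ?divnK // dvdn_mulr.
elim=> [|k IH] le; first by rewrite !mul0n.
have le' : k * g <= n by apply: leq_trans le; rewrite mulSn leq_addl.
rewrite mulSn addnC iotaD count_cat IH // add0n -{1}(addn0 (k * g)) iotaDl count_map.
rewrite mulSn addnC; congr (_ + _); apply: eq_in_count => j; rewrite mem_iota add0n => /= jg.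
rewrite H; last by apply: leq_trans le; rewrite mulSn addnC ltn_add2r.
by rewrite modnMDl modn_small.
Qed.

End Aux.

Lemma modS1 v y : 1 < v -> (y.+1 %% v == 1) = (y %% v == 0).
Proof.
move=> v1.
have h : 1 = (0 + 1) %% v by rewrite modn_small.
by rewrite [in LHS]h -addn1 eqn_modDr mod0n.
Qed.

Lemma count_nth (s : seq nat) c :
  count (fun i => nth 0 s i == c) (iota 0 (size s)) = count (pred1 c) s.
Proof. by rewrite -{3}(mkseq_nth 0 s) /mkseq count_map. Qed.

Lemma count_piv n (pi : {perm 'I_n}) v c :
  count (pred1 c) (pi_v pi v) = count (fun x => x.+1 %% v == c) (iota 0 n).
Proof.
have P : perm_eq (map (fun i => val (pi i)) (enum 'I_n)) (iota 0 n).
  rewrite -val_enum_ord (map_comp val pi); apply: perm_map; apply: uniq_perm.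
  - by rewrite map_inj_uniq ?enum_uniq //; exact: perm_inj.
  - exact: enum_uniq.
  - move=> x; rewrite mem_enum -{1}(permKV pi x) mem_map ?mem_enum //; exact: perm_inj.
rewrite -(seq.permP P) count_map /pi_v count_map.
rewrite count_map enumT. by apply: eq_count.
Qed.

Theorem lemma1 (p v : nat) (pi : {perm 'I_(p.-1)}) :
  prime p -> 1 < v -> v < p.-1 -> ~ (p = 1 %[mod v]) ->
  least_period (pi_v pi v) p.-1.
Proof.
move=> pp v1 vn pv.
set n := p.-1 in pi vn *.
have sz : size (pi_v pi v) = n by rewrite /pi_v size_map size_enum_ord.
have n0 : 0 < n by lia.
have pE : p = n.+1 by rewrite /n prednK // prime_gt0.
have nv : n %% v != 0.
  apply/negP => /eqP h; apply: pv; rewrite pE -addn1 -modnDml h add0n.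
  by [].
split => //.
  by move=> i; rewrite sz => lt; rewrite modnDr modn_small.
move=> r r0 Hr; rewrite leqNgt; apply/negP => rn.
set s := pi_v pi v in sz Hr.
have Hg := per_gcd Hr; rewrite sz in Hg.
set g := gcdn n r in Hg.
have g0 : 0 < g by rewrite gcdn_gt0 n0.
have gn : g %| n by apply: dvdn_gcdl.
have gr : g <= r by apply: dvdn_leq => //; apply: dvdn_gcdr.
have gn' : g %| size s by rewrite sz.
have Hs := per_small gn' g0 Hg.
have D c : (n %/ g) %| count (fun x => x.+1 %% v == c) (iota 0 n).
  by have := @per_count s g c gn' g0 Hs; rewrite count_nth count_piv sz.
have C1 : count (fun x => x.+1 %% v == 1) (iota 0 n) =
          (count (fun x => x.+1 %% v == 0) (iota 0 n.-1)).+1.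
  rewrite -(prednK n0) /=.
  have -> : iota 1 n.-1 = map (addn 1) (iota 0 n.-1) by rewrite -iotaDl.
  rewrite count_map modn_small // eqxx add1n; congr S; apply: eq_count => x /=.
  by rewrite add1n modS1.
have C0 : count (fun x => x.+1 %% v == 0) (iota 0 n) =
          count (fun x => x.+1 %% v == 0) (iota 0 n.-1).
  rewrite -{1}(prednK n0) -addn1 iotaD count_cat /= add0n prednK // (negbTE nv).
  by rewrite !addn0.
have d1 : n %/ g %| 1.
  by have := D 1; rewrite C1 -addn1 (dvdn_addr _ (_ : _ %| _)) // -C0; apply: D.
move: d1; rewrite dvdn1 => /eqP d1.
have : n = g by rewrite -(divnK gn) d1 mul1n.
move=> ng; move: rn; rewrite ltnNge; move/negP; apply; by rewrite ng.
Qed.
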